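(* For every integer $d\ge 3$, the space $\mathcal P_d$ is path connected.
   Context: A polynomial knot is a map $\phi:\mathbb R\to\mathbb R^3$ with real polynomial components which is a smooth embedding ($\phi$ injective and $\phi'(t)\ne0$ for all $t$). For $d\ge2$, $\mathcal A_d$ is the set of polynomial maps $t\mapsto(f(t),g(t),h(t))$ with $\deg f\le d-2$, $\deg g\le d-1$, $\deg h\le d$, topologized via the bijection $\eta:\mathcal A_d\to\mathbb R^{3d}$ sending $(f,g,h)$ to the vector $(a_0,\dots,a_{d-2},b_0,\dots,b_{d-1},c_0,\dots,c_d)$ of coefficients of $f=\sum a_it^i$, $g=\sum b_it^i$, $h=\sum c_it^i$ (Euclidean topology). The zero polynomial has degree $-\infty$. $\mathcal P_d$ is the subspace of $\mathcal A_d$ consisting of polynomial knots $(f,g,h)$ with $\deg f<\deg g<\deg h\le d$. *)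

(* Defs.v *)
From Stdlib Require Import Reals.
Open Scope R_scope.

(* A coefficient sequence; only indices 0..n are meaningful for a
   polynomial of degree <= n. *)
Definition coefs := nat -> R.

(* A point of A_d: coefficient sequences (a, b, c) of (f, g, h), where only
   a_0..a_{d-2}, b_0..b_{d-1}, c_0..c_d are meaningful (the bijection eta). *)
Definition ptA := (coefs * coefs * coefs)%type.

Definition peval (a : coefs) (n : nat) (t : R) : R :=
  sum_f_R0 (fun i => a i * t ^ i) n.

(* Degree of sum_{i=0}^n a_i t^i; None stands for -infinity (zero polynomial). *)
Fixpoint pdeg (a : coefs) (n : nat) : option nat :=
  match n with
  | O => if Req_EM_T (a O) 0 then None else Some O
  | S m => if Req_EM_T (a (S m)) 0 then pdeg a m else Some (S m)
  end.

Definition deg_lt (x y : option nat) : Prop :=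
  match x, y with
  | _, None => False
  | None, Some _ => True
  | Some i, Some j => (i < j)%nat
  end.

Definition deg_le (x : option nat) (d : nat) : Prop :=
  match x with None => True | Some i => (i <= d)%nat end.

Definition fA (d : nat) (p : ptA) : R -> R := let '(a, _, _) := p in peval a (d - 2).
Definition gA (d : nat) (p : ptA) : R -> R := let '(_, b, _) := p in peval b (d - 1).
Definition hA (d : nat) (p : ptA) : R -> R := let '(_, _, c) := p in peval c d.

Definition poly_knot (d : nat) (p : ptA) : Prop :=
  (forall t1 t2, fA d p t1 = fA d p t2 -> gA d p t1 = gA d p t2 ->
                 hA d p t1 = hA d p t2 -> t1 = t2) /\
  (forall t, ~ (derivable_pt_lim (fA d p) t 0 /\
                derivable_pt_lim (gA d p) t 0 /\
                derivable_pt_lim (hA d p) t 0)).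

Definition inPd (d : nat) (p : ptA) : Prop :=
  let '(a, b, c) := p in
  poly_knot d p /\
  deg_lt (pdeg a (d - 2)) (pdeg b (d - 1)) /\
  deg_lt (pdeg b (d - 1)) (pdeg c d) /\
  deg_le (pdeg c d) d.

(* Equality of points of A_d (equality of their images under eta). *)
Definition eqA (d : nat) (p q : ptA) : Prop :=
  let '(a, b, c) := p in let '(a', b', c') := q in
  (forall i, (i <= d - 2)%nat -> a i = a' i) /\
  (forall i, (i <= d - 1)%nat -> b i = b' i) /\
  (forall i, (i <= d)%nat -> c i = c' i).

Definition unit_I (s : R) : Prop := 0 <= s <= 1.

Definition path_in_A (d : nat) (gam : R -> ptA) : Prop :=
  (forall i, (i <= d - 2)%nat -> forall s, unit_I s ->
     continue_in (fun u => fst (fst (gam u)) i) unit_I s) /\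
  (forall i, (i <= d - 1)%nat -> forall s, unit_I s ->
     continue_in (fun u => snd (fst (gam u)) i) unit_I s) /\
  (forall i, (i <= d)%nat -> forall s, unit_I s ->
     continue_in (fun u => snd (gam u) i) unit_I s).

Definition Pd_path_connected (d : nat) : Prop :=
  forall p q, inPd d p -> inPd d q ->
  exists gam : R -> ptA,
    path_in_A d gam /\ eqA d (gam 0) p /\ eqA d (gam 1) q /\
    (forall s, unit_I s -> inPd d (gam s)).

(* Main.v *)
Require Import Defs.
From Stdlib Require Import Reals Lra Lia.
Open Scope R_scope.

Lemma sum_ext (f g : nat -> R) n : (forall i, (i <= n)%nat -> f i = g i) ->
  sum_f_R0 f n = sum_f_R0 g n.
Proof. induction n; intros H; simpl. apply H; lia.
  rewrite IHn by (intros; apply H; lia). rewrite H by lia. reflexivity. Qed.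

Lemma sum_add (f g : nat -> R) n : sum_f_R0 (fun i => f i + g i) n = sum_f_R0 f n + sum_f_R0 g n.
Proof. induction n; simpl; [ring| rewrite IHn; ring]. Qed.

Lemma sum_scal (f : nat -> R) x n : sum_f_R0 (fun i => x * f i) n = x * sum_f_R0 f n.
Proof. induction n; simpl; [ring| rewrite IHn; ring]. Qed.

Lemma sum_single (f : nat -> R) k n : (k <= n)%nat -> (forall i, i <> k -> f i = 0) ->
  sum_f_R0 f n = f k.
Proof. intros Hk H. induction n; simpl.
  - replace k with 0%nat by lia. reflexivity.
  - destruct (Nat.eq_dec k (S n)) as [->|Hn].
    + rewrite (sum_ext _ (fun _ => 0)). 2:{ intros; apply H; lia. }
      clear. assert (sum_f_R0 (fun _ => 0) n = 0) by (induction n; simpl; [ring| rewrite IHn; ring]).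
      rewrite H; ring.
    + rewrite IHn by lia. rewrite (H (S n)) by lia. ring. Qed.

Definition pder (a : coefs) (n : nat) (t : R) : R :=
  sum_f_R0 (fun i => INR i * a i * t ^ (pred i)) n.

Lemma peval_deriv a n t : derivable_pt_lim (peval a n) t (pder a n t).
Proof.
  induction n.
  - unfold pder; simpl. change (peval a 0) with (fct_cte (a 0%nat * 1)).
    replace (0 * a 0%nat * 1) with 0 by ring. apply derivable_pt_lim_const.
  - change (peval a (S n)) with (peval a n + mult_real_fct (a (S n)) (fun y => y ^ S n))%F.
    change (pder a (S n) t) with (pder a n t + INR (S n) * a (S n) * t ^ pred (S n)).
    replace (pder a n t + INR (S n) * a (S n) * t ^ pred (S n))
      with (pder a n t + a (S n) * (INR (S n) * t ^ pred (S n))) by ring.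
    apply derivable_pt_lim_plus; auto.
    apply derivable_pt_lim_scal. apply derivable_pt_lim_pow.
Qed.

Definition cadd (a b : coefs) : coefs := fun i => a i + b i.
Definition cscal (x : R) (a : coefs) : coefs := fun i => x * a i.
Definition mono (k : nat) : coefs := fun i => if Nat.eqb i k then 1 else 0.
Definition czero : coefs := fun _ => 0.
Definition cut (a : coefs) (m : nat) : coefs := fun i => if Nat.leb i m then a i else 0.
Definition cscale (s : R) (a : coefs) : coefs := fun i => a i * s ^ i.

Lemma peval_ext a b n t : (forall i, (i <= n)%nat -> a i = b i) -> peval a n t = peval b n t.
Proof. intros H; unfold peval; apply sum_ext; intros; rewrite H; auto. Qed.
Lemma pder_ext a b n t : (forall i, (i <= n)%nat -> a i = b i) -> pder a n t = pder b n t.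
Proof. intros H; unfold pder; apply sum_ext; intros; rewrite H; auto. Qed.
Lemma peval_add a b n t : peval (cadd a b) n t = peval a n t + peval b n t.
Proof. unfold peval, cadd. rewrite <- sum_add. apply sum_ext; intros; ring. Qed.
Lemma pder_add a b n t : pder (cadd a b) n t = pder a n t + pder b n t.
Proof. unfold pder, cadd. rewrite <- sum_add. apply sum_ext; intros; ring. Qed.
Lemma peval_scal x a n t : peval (cscal x a) n t = x * peval a n t.
Proof. unfold peval, cscal. rewrite <- sum_scal. apply sum_ext; intros; ring. Qed.
Lemma pder_scal x a n t : pder (cscal x a) n t = x * pder a n t.
Proof. unfold pder, cscal. rewrite <- sum_scal. apply sum_ext; intros; ring. Qed.
Lemma peval_zero n t : peval czero n t = 0.
Proof. unfold peval, czero. rewrite (sum_ext _ (fun i => 0 * 1)). rewrite sum_scal; ring.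
  intros; ring. Qed.
Lemma pder_zero n t : pder czero n t = 0.
Proof. unfold pder, czero. rewrite (sum_ext _ (fun i => 0 * 1)). rewrite sum_scal; ring.
  intros; ring. Qed.
Lemma peval_mono k n t : (k <= n)%nat -> peval (mono k) n t = t ^ k.
Proof. intros Hk. unfold peval. rewrite (sum_single _ k); auto.
  unfold mono; rewrite Nat.eqb_refl; ring.
  intros i Hi; unfold mono. destruct (Nat.eqb_spec i k); [lia|ring]. Qed.
Lemma pder_mono k n t : (k <= n)%nat -> pder (mono k) n t = INR k * t ^ pred k.
Proof. intros Hk. unfold pder. rewrite (sum_single _ k); auto.
  unfold mono; rewrite Nat.eqb_refl; ring.
  intros i Hi; unfold mono. destruct (Nat.eqb_spec i k); [lia|ring]. Qed.
Lemma peval_cut a m n t : (m <= n)%nat -> peval (cut a m) n t = peval a m t.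
Proof. intros H. induction H.
  - apply peval_ext. intros i Hi. unfold cut. destruct (Nat.leb_spec i m); auto; lia.
  - unfold peval in *. simpl. rewrite IHle. unfold cut.
    destruct (Nat.leb_spec (S m0) m); [lia|ring]. Qed.
Lemma pder_cut a m n t : (m <= n)%nat -> pder (cut a m) n t = pder a m t.
Proof. intros H. induction H.
  - apply pder_ext. intros i Hi. unfold cut. destruct (Nat.leb_spec i m); auto; lia.
  - unfold pder in *. change (sum_f_R0 (fun i => INR i * cut a m i * t ^ pred i) (S m0))
      with (sum_f_R0 (fun i => INR i * cut a m i * t ^ pred i) m0 + INR (S m0) * cut a m (S m0) * t ^ pred (S m0)).
    rewrite IHle. unfold cut.
    destruct (Nat.leb_spec (S m0) m); [lia|ring]. Qed.
Lemma peval_cscale s a n t : peval (cscale s a) n t = peval a n (s * t).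
Proof. unfold peval, cscale. apply sum_ext; intros. rewrite Rpow_mult_distr. ring. Qed.
Lemma pder_cscale s a n t : pder (cscale s a) n t = s * pder a n (s * t).
Proof. unfold pder, cscale. rewrite <- sum_scal. apply sum_ext; intros i _.
  destruct i. simpl; ring. simpl pred. rewrite Rpow_mult_distr. simpl. ring. Qed.
Lemma pder_at0 a n : (1 <= n)%nat -> pder a n 0 = a 1%nat.
Proof. intros H. unfold pder. rewrite (sum_single _ 1); auto. simpl; ring.
  intros i Hi. destruct i. simpl; ring. destruct i. lia. simpl; ring. Qed.

Lemma pdeg_some a n k : pdeg a n = Some k <->
  ((k <= n)%nat /\ a k <> 0 /\ forall j, (k < j <= n)%nat -> a j = 0).
Proof.
  induction n; simpl.
  - destruct (Req_EM_T (a 0%nat) 0); split; intros H.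
    + discriminate. + destruct H as [H1 [H2 _]]. assert (k = 0%nat) by lia. subst k. tauto.
    + inversion H; subst. repeat split; auto. intros; lia.
    + destruct H as [H1 _]. f_equal; lia.
  - destruct (Req_EM_T (a (S n)) 0).
    + rewrite IHn. split; intros [H1 [H2 H3]]; repeat split; auto.
      * intros j Hj. destruct (Nat.eq_dec j (S n)); [subst; auto| apply H3; lia].
      * destruct (Nat.eq_dec k (S n)); [subst; tauto| lia].
      * intros j Hj; apply H3; lia.
    + split; intros H.
      * inversion H; subst. repeat split; auto. intros; lia.
      * destruct H as [H1 [H2 H3]]. destruct (Nat.eq_dec k (S n)); [subst; auto|].
        exfalso; apply n0; apply H3; lia.
Qed.
Lemma pdeg_none a n : pdeg a n = None <-> forall j, (j <= n)%nat -> a j = 0.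
Proof.
  induction n; simpl.
  - destruct (Req_EM_T (a 0%nat) 0); split; intros H; auto.
    + intros j Hj; replace j with 0%nat by lia; auto.
    + discriminate. + exfalso; apply n; apply H; lia.
  - destruct (Req_EM_T (a (S n)) 0).
    + rewrite IHn. split; intros H j Hj; [destruct (Nat.eq_dec j (S n)); [subst;auto|apply H; lia]| apply H; lia].
    + split; intros H; [discriminate| exfalso; apply n0; apply H; lia].
Qed.
Lemma pdeg_bound a n k : pdeg a n = Some k -> (k <= n)%nat.
Proof. intros H; apply pdeg_some in H; tauto. Qed.

Definition Knot (d : nat) (p : ptA) : Prop :=
  let '(a, b, c) := p in
  (forall t1 t2, peval a (d-2) t1 = peval a (d-2) t2 -> peval b (d-1) t1 = peval b (d-1) t2 ->
     peval c d t1 = peval c d t2 -> t1 = t2) /\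
  (forall t, ~ (pder a (d-2) t = 0 /\ pder b (d-1) t = 0 /\ pder c d t = 0)).

Definition DegOK (d : nat) (p : ptA) : Prop :=
  let '(a, b, c) := p in
  exists kg kh, (kg < kh)%nat /\ (kh <= d)%nat /\ b kg <> 0 /\
   (forall j, (kg < j <= d - 1)%nat -> b j = 0) /\ c kh <> 0 /\
   (forall j, (kh < j <= d)%nat -> c j = 0) /\ (forall j, (kg <= j <= d - 2)%nat -> a j = 0).

Lemma knot_iff d a b c : poly_knot d (a, b, c) <-> Knot d (a, b, c).
Proof.
  unfold poly_knot, Knot, fA, gA, hA. split; intros [H1 H2]; split; auto; intros t [Ha [Hb Hc]]; apply (H2 t).
  - pose proof (peval_deriv a (d-2) t) as D1; pose proof (peval_deriv b (d-1) t) as D2;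
    pose proof (peval_deriv c d t) as D3. rewrite Ha in D1; rewrite Hb in D2; rewrite Hc in D3. tauto.
  - repeat split.
    + eapply uniqueness_limite; [apply peval_deriv| exact Ha].
    + eapply uniqueness_limite; [apply peval_deriv| exact Hb].
    + eapply uniqueness_limite; [apply peval_deriv| exact Hc].
Qed.

Lemma inPd_iff d a b c : (3 <= d)%nat -> inPd d (a, b, c) <-> Knot d (a, b, c) /\ DegOK d (a, b, c).
Proof.
  intros Hd. unfold inPd. rewrite knot_iff. split.
  - intros [HK [H1 [H2 H3]]]. split; auto.
    destruct (pdeg c d) as [kh|] eqn:Ec; [|destruct (pdeg b (d-1)); contradiction].
    destruct (pdeg b (d-1)) as [kg|] eqn:Eb; [|destruct (pdeg a (d-2)); contradiction].
    simpl in H2. apply pdeg_some in Ec. apply pdeg_some in Eb.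
    exists kg, kh. destruct Ec as [? [? ?]]; destruct Eb as [? [? ?]]. repeat split; auto.
    destruct (pdeg a (d-2)) as [ka|] eqn:Ea.
    + simpl in H1. apply pdeg_some in Ea. intros j Hj. apply Ea; lia.
    + pose proof (proj1 (pdeg_none _ _) Ea) as Ea'. intros j Hj; apply Ea'; lia.
  - intros [HK [kg [kh [? [? [? [? [? [? ?]]]]]]]]]. split; auto.
    assert (Eb : pdeg b (d-1) = Some kg) by (apply pdeg_some; repeat split; auto; lia).
    assert (Ec : pdeg c d = Some kh) by (apply pdeg_some; repeat split; auto).
    rewrite Eb, Ec. simpl. repeat split; auto.
    destruct (pdeg a (d-2)) as [ka|] eqn:Ea; simpl; auto.
    apply pdeg_some in Ea. destruct Ea as [? [? ?]].
    destruct (Nat.lt_ge_cases ka kg); auto. exfalso. apply H7. apply H5; lia.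
Qed.

Lemma eqA_refl d p : eqA d p p.
Proof. destruct p as [[a b] c]; simpl; auto. Qed.
Lemma eqA_sym d p q : eqA d p q -> eqA d q p.
Proof. destruct p as [[a b] c]; destruct q as [[a' b'] c']; simpl.
  intros [H1 [H2 H3]]; repeat split; intros; symmetry; auto. Qed.
Lemma eqA_trans d p q r : eqA d p q -> eqA d q r -> eqA d p r.
Proof. destruct p as [[a b] c]; destruct q as [[a' b'] c']; destruct r as [[a'' b''] c'']; simpl.
  intros [H1 [H2 H3]] [G1 [G2 G3]]; repeat split; intros; [rewrite H1|rewrite H2|rewrite H3]; auto. Qed.

Lemma inPd_eqA d p q : (3 <= d)%nat -> eqA d p q -> inPd d p -> inPd d q.
Proof.
  intros Hd. destruct p as [[a b] c]; destruct q as [[a' b'] c']; simpl eqA.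
  intros [E1 [E2 E3]]. rewrite !inPd_iff by auto.
  intros [[K1 K2] [kg [kh [? [? [? [? [? [? ?]]]]]]]]]. split; [split|].
  - intros t1 t2. rewrite !(peval_ext a' a (d-2)), !(peval_ext b' b (d-1)), !(peval_ext c' c d)
      by (intros; symmetry; auto). apply K1.
  - intros t. rewrite (pder_ext a' a (d-2)), (pder_ext b' b (d-1)), (pder_ext c' c d)
      by (intros; symmetry; auto). apply K2.
  - exists kg, kh. repeat split; auto.
    + rewrite <- E2 by lia; auto.
    + intros j Hj; rewrite <- E2 by lia; auto.
    + rewrite <- E3 by lia; auto.
    + intros j Hj; rewrite <- E3 by lia; auto.
    + intros j Hj; rewrite <- E1 by lia; auto.
Qed.

Definition cont_coef (d : nat) (gam : R -> ptA) : Prop :=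
  (forall i, (i <= d - 2)%nat -> continuity (fun u => fst (fst (gam u)) i)) /\
  (forall i, (i <= d - 1)%nat -> continuity (fun u => snd (fst (gam u)) i)) /\
  (forall i, (i <= d)%nat -> continuity (fun u => snd (gam u) i)).

Definition Conn (d : nat) (p q : ptA) : Prop :=
  exists gam, cont_coef d gam /\ eqA d (gam 0) p /\ eqA d (gam 1) q /\
    forall s, unit_I s -> inPd d (gam s).

Lemma seg d (P : R -> ptA) : cont_coef d P -> (forall u, unit_I u -> inPd d (P u)) ->
  Conn d (P 0) (P 1).
Proof. intros; exists P; split; [auto|split; [apply eqA_refl|split; [apply eqA_refl|auto]]]. Qed.

Lemma Conn_eqA_r d p q q' : Conn d p q -> eqA d q q' -> Conn d p q'.
Proof. intros [g [? [? [? ?]]]] E. exists g; split; [auto|split; [auto|split; [eapply eqA_trans; eauto|auto]]]. Qed.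
Lemma Conn_eqA_l d p p' q : eqA d p' p -> Conn d p q -> Conn d p' q.
Proof. intros E [g [? [? [? ?]]]]. exists g; split; [auto|split; [eapply eqA_trans; eauto; apply eqA_sym; auto|split; auto]]. Qed.

Lemma cont_comp_lin (f : R -> R) : continuity f -> continuity (fun s => f (1 - s)).
Proof. intros H. apply (continuity_comp (fun s => 1 - s) f); auto. reg. Qed.

Lemma Conn_sym d p q : Conn d p q -> Conn d q p.
Proof.
  intros [g [[C1 [C2 C3]] [E0 [E1 HI]]]]. exists (fun s => g (1 - s)).
  split; [split; [|split]|split; [|split]].
  - intros i Hi; apply (cont_comp_lin (fun u => fst (fst (g u)) i)); auto.
  - intros i Hi; apply (cont_comp_lin (fun u => snd (fst (g u)) i)); auto.
  - intros i Hi; apply (cont_comp_lin (fun u => snd (g u) i)); auto.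
  - replace (1 - 0) with 1 by ring; auto.
  - replace (1 - 1) with 0 by ring; auto.
  - intros s [? ?]; apply HI; split; lra.
Qed.

Definition lo (s : R) := (2*s + 1 - Rabs (2*s - 1))/2.
Definition hi (s : R) := (2*s - 1 + Rabs (2*s - 1))/2.
Lemma lo_cont : continuity lo. Proof. unfold lo; reg. Qed.
Lemma hi_cont : continuity hi. Proof. unfold hi; reg. Qed.
Lemma lohi1 s : s <= /2 -> lo s = 2 * s /\ hi s = 0.
Proof. intros; unfold lo, hi. rewrite Rabs_left1 by lra. split; field. Qed.
Lemma lohi2 s : /2 <= s -> lo s = 1 /\ hi s = 2 * s - 1.
Proof. intros; unfold lo, hi. rewrite Rabs_right by lra. split; field. Qed.

Definition glue (g1 g2 : R -> ptA) (s : R) : ptA :=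
  ((fun i => fst (fst (g1 (lo s))) i + fst (fst (g2 (hi s))) i - fst (fst (g1 1)) i),
   (fun i => snd (fst (g1 (lo s))) i + snd (fst (g2 (hi s))) i - snd (fst (g1 1)) i),
   (fun i => snd (g1 (lo s)) i + snd (g2 (hi s)) i - snd (g1 1) i)).

Lemma cont_glue (X1 X2 : R -> R) c : continuity X1 -> continuity X2 ->
  continuity (fun s => X1 (lo s) + X2 (hi s) - c).
Proof. intros H1 H2.
  assert (A1 : continuity (fun s => X1 (lo s))) by (apply (continuity_comp lo X1); auto using lo_cont).
  assert (A2 : continuity (fun s => X2 (hi s))) by (apply (continuity_comp hi X2); auto using hi_cont).
  apply (continuity_minus (fun s => X1 (lo s) + X2 (hi s)) (fun _ => c)).
  apply (continuity_plus (fun s => X1 (lo s)) (fun s => X2 (hi s))); auto.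
  apply continuity_const. intros x y; auto.
Qed.

Lemma glue_eq1 d g1 g2 q s : eqA d (g1 1) q -> eqA d (g2 0) q -> s <= /2 ->
  eqA d (glue g1 g2 s) (g1 (2 * s)).
Proof.
  intros E1 E2 Hs. destruct (lohi1 s Hs) as [L H]. unfold glue. rewrite L, H.
  pose proof (eqA_trans _ _ _ _ E2 (eqA_sym _ _ _ E1)) as E.
  destruct (g1 1) as [[a b] c]; destruct (g2 0) as [[a' b'] c']; destruct (g1 (2*s)) as [[x y] z].
  simpl in *. destruct E as [F1 [F2 F3]]. repeat split; intros; [rewrite F1|rewrite F2|rewrite F3]; auto; ring.
Qed.
Lemma glue_eq2 d g1 g2 s : /2 <= s -> eqA d (glue g1 g2 s) (g2 (2 * s - 1)).
Proof.
  intros Hs. destruct (lohi2 s Hs) as [L H]. unfold glue. rewrite L, H.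
  destruct (g1 1) as [[a b] c]; destruct (g2 (2*s-1)) as [[x y] z].
  simpl. repeat split; intros; ring.
Qed.

Lemma Conn_trans d p q r : (3 <= d)%nat -> Conn d p q -> Conn d q r -> Conn d p r.
Proof.
  intros Hd [g1 [[C1 [C2 C3]] [E0 [E1 HI]]]] [g2 [[D1 [D2 D3]] [F0 [F1 HJ]]]].
  exists (glue g1 g2). split; [split; [|split]|split; [|split]].
  - intros i Hi; unfold glue; simpl; apply (cont_glue (fun u => fst (fst (g1 u)) i) (fun u => fst (fst (g2 u)) i)); auto.
  - intros i Hi; unfold glue; simpl; apply (cont_glue (fun u => snd (fst (g1 u)) i) (fun u => snd (fst (g2 u)) i)); auto.
  - intros i Hi; unfold glue; simpl; apply (cont_glue (fun u => snd (g1 u) i) (fun u => snd (g2 u) i)); auto.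
  - eapply eqA_trans; [apply (glue_eq1 d g1 g2 q); auto; lra|]. replace (2*0) with 0 by ring; auto.
  - eapply eqA_trans; [apply glue_eq2; lra|]. replace (2*1-1) with 1 by ring; auto.
  - intros s [Hs0 Hs1]. destruct (Rle_dec s (/2)).
    + eapply inPd_eqA; auto. apply eqA_sym. apply (glue_eq1 d g1 g2 q); auto.
      apply HI; split; lra.
    + eapply inPd_eqA; auto. apply eqA_sym. apply glue_eq2; lra.
      apply HJ; split; lra.
Qed.

Lemma cont_in_of (f : R -> R) s : continuity f -> continue_in f unit_I s.
Proof.
  intros H. pose proof (H s) as Hc. unfold continuity_pt, continue_in, limit1_in, limit_in in *.
  intros eps He. destruct (Hc eps He) as [alp [Ha Hx]]. exists alp; split; auto.
  intros y [[Hy1 Hy2] Hd]. apply Hx. split; auto. split; auto. exact I.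
Qed.

Lemma Conn_final d p q : Conn d p q -> exists gam : R -> ptA,
    path_in_A d gam /\ eqA d (gam 0) p /\ eqA d (gam 1) q /\
    (forall s, unit_I s -> inPd d (gam s)).
Proof.
  intros [g [[C1 [C2 C3]] H]]. exists g. split; auto.
  split; [|split]; intros; apply cont_in_of; auto.
Qed.

Lemma prod0 s x y : s <> 0 -> x <> 0 -> s * (x * y) = 0 -> y = 0.
Proof. intros Hs Hx H. apply Rmult_integral in H; destruct H as [H|H]; [contradiction|].
  apply Rmult_integral in H; destruct H as [H|H]; [contradiction|auto]. Qed.
Lemma lin_inj x y z k : x <> 0 -> x * y + k = x * z + k -> y = z.
Proof. intros Hx H. apply (Rmult_eq_reg_l x); auto. lra. Qed.

Lemma knot_transform d a b c a' b' c' s al be de ga ep ze k1 k2 k3 :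
 Knot d (a,b,c) -> s <> 0 -> al <> 0 -> be <> 0 -> de <> 0 ->
 (forall t, peval a' (d-2) t = al * peval a (d-2) (s*t) + k1) ->
 (forall t, peval b' (d-1) t = be * peval b (d-1) (s*t) + (ga * peval a (d-2) (s*t) + k2)) ->
 (forall t, peval c' d t = de * peval c d (s*t) + (ep * peval b (d-1) (s*t) + ze * peval a (d-2) (s*t) + k3)) ->
 (forall t, pder a' (d-2) t = s * (al * pder a (d-2) (s*t))) ->
 (forall t, pder b' (d-1) t = s * (be * pder b (d-1) (s*t) + ga * pder a (d-2) (s*t))) ->
 (forall t, pder c' d t = s * (de * pder c d (s*t) + (ep * pder b (d-1) (s*t) + ze * pder a (d-2) (s*t)))) ->
 Knot d (a',b',c').
Proof.
  intros [K1 K2] Hs Ha Hb Hc Pa Pb Pc Da Db Dc. split.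
  - intros t1 t2 E1 E2 E3. rewrite Pa, Pa in E1. rewrite Pb, Pb in E2. rewrite Pc, Pc in E3.
    apply lin_inj in E1; auto. rewrite E1 in E2. apply lin_inj in E2; auto.
    rewrite E1, E2 in E3. apply lin_inj in E3; auto.
    apply (Rmult_eq_reg_l s); auto.
  - intros t [A [B C]]. rewrite Da in A. rewrite Db in B. rewrite Dc in C.
    apply prod0 in A; auto. rewrite A in B. rewrite A in C.
    replace (s * (be * pder b (d - 1) (s * t) + ga * 0)) with (s * (be * pder b (d - 1) (s * t))) in B by ring.
    apply prod0 in B; auto. rewrite B in C.
    replace (s * (de * pder c d (s * t) + (ep * 0 + ze * 0))) with (s * (de * pder c d (s * t))) in C by ring.
    apply prod0 in C; auto. apply (K2 (s*t)); auto.
Qed.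

Lemma knot_monoH d a b c : (forall t1 t2, peval c d t1 = peval c d t2 -> t1 = t2) ->
  (forall t, pder c d t <> 0) -> Knot d (a,b,c).
Proof. intros H1 H2; split; [intros; auto| intros t [_ [_ C]]; apply (H2 t); auto]. Qed.
Lemma knot_monoG d a b c : (forall t1 t2, peval b (d-1) t1 = peval b (d-1) t2 -> t1 = t2) ->
  (forall t, pder b (d-1) t <> 0) -> Knot d (a,b,c).
Proof. intros H1 H2; split; [intros; auto| intros t [_ [C _]]; apply (H2 t); auto]. Qed.

Ltac pev := rewrite ?peval_add, ?peval_scal, ?pder_add, ?pder_scal, ?peval_zero, ?pder_zero;
  rewrite ?peval_mono, ?pder_mono by lia; simpl.
Ltac cval := unfold cadd, cscal, mono, czero;
  repeat match goal with |- context [Nat.eqb ?x ?y] => destruct (Nat.eqb_spec x y) end;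
  try (exfalso; lia).
Ltac ccont := split; [|split]; intros i Hi; simpl; unfold cadd, cscal, mono, czero;
  repeat match goal with |- context [Nat.eqb ?x ?y] => destruct (Nat.eqb x y) end; reg.

Definition Hc C0 C1 := cadd (cadd (cscal C0 (mono 0)) (cscal C1 (mono 1))) (cscal C1 (mono 3)).
Definition Zc B C0 C1 : ptA := (czero, cscal B (mono 0), cadd (cscal C0 (mono 0)) (cscal C1 (mono 1))).
Definition T0 : ptA := (czero, mono 1, mono 2).

Lemma Hc_inj d C0 C1 u : (3 <= d)%nat -> C1 <> 0 -> 0 <= u ->
  (forall t1 t2, peval (cadd (cadd (cscal C0 (mono 0)) (cscal C1 (mono 1))) (cscal (u*C1) (mono 3))) d t1 =
      peval (cadd (cadd (cscal C0 (mono 0)) (cscal C1 (mono 1))) (cscal (u*C1) (mono 3))) d t2 -> t1 = t2) /\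
  (forall t, pder (cadd (cadd (cscal C0 (mono 0)) (cscal C1 (mono 1))) (cscal (u*C1) (mono 3))) d t <> 0).
Proof.
  intros Hd HC Hu. split.
  - intros t1 t2. pev. intros E.
    assert (E2 : C1 * ((t1 - t2) * (1 + u * (t1*t1 + t1*t2 + t2*t2))) = 0) by (rewrite <- (Rminus_diag_eq _ _ E); ring).
    apply Rmult_integral in E2; destruct E2 as [E2|E2]; [contradiction|].
    apply Rmult_integral in E2; destruct E2 as [E2|E2]; [lra|].
    exfalso. assert (0 <= t1*t1 + t1*t2 + t2*t2) by nra. nra.
  - intros t. pev. intros E.
    assert (E2 : C1 * (1 + 3 * u * (t*t)) = 0) by (rewrite <- E; ring).
    apply Rmult_integral in E2; destruct E2 as [E2|E2]; [contradiction|]. nra.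
Qed.

Lemma S3 d B C0 C1 : (3 <= d)%nat -> B <> 0 -> C1 <> 0 ->
  Conn d (Zc B C0 C1) (czero, cscal B (mono 0), Hc C0 C1).
Proof.
  intros Hd HB HC.
  set (P := fun u : R => (czero, cscal B (mono 0),
        cadd (cadd (cscal C0 (mono 0)) (cscal C1 (mono 1))) (cscal (u*C1) (mono 3)))).
  apply (Conn_eqA_l d (P 0)); [|apply (Conn_eqA_r d _ (P 1))].
  - unfold P, Zc; simpl. repeat split; intros; cval; ring.
  - apply seg.
    + unfold P; ccont.
    + intros u [Hu0 Hu1]. unfold P. apply inPd_iff; auto. split.
      * destruct (Hc_inj d C0 C1 u Hd HC Hu0). apply knot_monoH; auto.
      * destruct (Req_EM_T u 0) as [->|Hu].
        -- exists 0%nat, 1%nat. repeat split; try lia; intros; cval; lra.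
        -- exists 0%nat, 3%nat. repeat split; try lia; intros; cval; try lra.
           intros E; apply Hu. nra.
  - unfold P, Hc; simpl. repeat split; intros; cval; ring.
Qed.

Lemma Hc_knot d a b C0 C1 : (3 <= d)%nat -> C1 <> 0 -> Knot d (a, b, Hc C0 C1).
Proof.
  intros Hd HC. assert (E : Hc C0 C1 = cadd (cadd (cscal C0 (mono 0)) (cscal C1 (mono 1))) (cscal (1*C1) (mono 3)))
    by (unfold Hc; rewrite Rmult_1_l; reflexivity).
  rewrite E. destruct (Hc_inj d C0 C1 1 Hd HC) as [? ?]; [lra|]. apply knot_monoH; auto.
Qed.

Lemma S4 d B C0 C1 : (3 <= d)%nat -> B <> 0 -> C1 <> 0 ->
  Conn d (czero, cscal B (mono 0), Hc C0 C1) (czero, cadd (cscal B (mono 0)) (cscal 1 (mono 1)), Hc C0 C1).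
Proof.
  intros Hd HB HC.
  set (P := fun u : R => (czero, cadd (cscal B (mono 0)) (cscal u (mono 1)), Hc C0 C1)).
  apply (Conn_eqA_l d (P 0)); [|apply seg].
  - unfold P; simpl. repeat split; intros; cval; ring.
  - unfold P, Hc; ccont.
  - intros u [Hu0 Hu1]. unfold P. apply inPd_iff; auto. split.
    + apply Hc_knot; auto.
    + destruct (Req_EM_T u 0) as [->|Hu].
      * exists 0%nat, 3%nat. unfold Hc. repeat split; try lia; intros; cval; lra.
      * exists 1%nat, 3%nat. unfold Hc. repeat split; try lia; intros; cval; lra.
Qed.

Lemma S5 d B C0 C1 : (3 <= d)%nat -> C1 <> 0 ->
  Conn d (czero, cadd (cscal B (mono 0)) (cscal 1 (mono 1)), Hc C0 C1)
         (czero, cadd (cscal ((1-1)*B) (mono 0)) (cscal 1 (mono 1)), Hc C0 C1).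
Proof.
  intros Hd HC.
  set (P := fun u : R => (czero, cadd (cscal ((1-u)*B) (mono 0)) (cscal 1 (mono 1)), Hc C0 C1)).
  apply (Conn_eqA_l d (P 0)); [|apply seg].
  - unfold P; simpl. repeat split; intros; cval; ring.
  - unfold P, Hc; ccont.
  - intros u [Hu0 Hu1]. unfold P. apply inPd_iff; auto. split.
    + apply Hc_knot; auto.
    + exists 1%nat, 3%nat. unfold Hc. repeat split; try lia; intros; cval; lra.
Qed.

Lemma S6 d B C0 C1 : (3 <= d)%nat -> C1 <> 0 ->
  Conn d (czero, cadd (cscal ((1-1)*B) (mono 0)) (cscal 1 (mono 1)), Hc C0 C1) T0.
Proof.
  intros Hd HC.
  set (P := fun u : R => (czero, mono 1, cadd (cscal (1-u) (Hc C0 C1)) (cscal u (mono 2)))).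
  apply (Conn_eqA_l d (P 0)); [|apply (Conn_eqA_r d _ (P 1))].
  - unfold P, Hc; simpl. repeat split; intros; cval; ring.
  - apply seg.
    + unfold P, Hc; ccont.
    + intros u [Hu0 Hu1]. unfold P. apply inPd_iff; auto. split.
      * apply knot_monoG.
        -- intros t1 t2. pev. lra.
        -- intros t. pev. lra.
      * destruct (Req_EM_T u 1) as [->|Hu].
        -- exists 1%nat, 2%nat. unfold Hc. repeat split; try lia; intros; cval; lra.
        -- exists 1%nat, 3%nat. unfold Hc. repeat split; try lia; intros; cval; try lra.
           intros E. apply Hu. replace ((1 - u) * (C0 * 0 + C1 * 0 + C1 * 1) + u * 0) with ((1-u)*C1) in E by ring.
           apply Rmult_integral in E. destruct E; [lra|].
           exfalso; apply HC; lra.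
  - unfold P, Hc, T0; simpl. repeat split; intros; cval; ring.
Qed.

Lemma Zc_T d B C0 C1 : (3 <= d)%nat -> B <> 0 -> C1 <> 0 -> Conn d (Zc B C0 C1) T0.
Proof.
  intros. eapply Conn_trans; auto. apply S3; auto.
  eapply Conn_trans; auto. apply S4; auto.
  eapply Conn_trans; auto. apply S5; auto. apply S6; auto.
Qed.

Definition zc (s : R) (c : coefs) : coefs :=
  fun i => match i with O => c O | S k => c (S k) * s ^ k end.

Lemma zc_peval s c n t : s * peval (zc s c) n t = peval c n (s*t) + (s-1) * c O.
Proof.
  rewrite <- peval_scal. rewrite (peval_ext _ (cadd (cscale s c) (cscal ((s-1) * c O) (mono 0)))).
  - pev. rewrite peval_cscale. ring.
  - intros i _. unfold cscal, cadd, cscale, mono, zc. destruct i; simpl; ring.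
Qed.
Lemma zc_pder s c n t : s * pder (zc s c) n t = s * pder c n (s*t).
Proof.
  rewrite <- pder_scal. rewrite (pder_ext _ (cadd (cscale s c) (cscal ((s-1) * c O) (mono 0)))).
  - pev. rewrite pder_cscale. ring.
  - intros i _. unfold cscal, cadd, cscale, mono, zc. destruct i; simpl; ring.
Qed.

Lemma DegOK_equiv d a b c a' b' c' : DegOK d (a,b,c) ->
  (forall i, a' i = 0 <-> a i = 0) -> (forall i, b' i = 0 <-> b i = 0) -> (forall i, c' i = 0 <-> c i = 0) ->
  DegOK d (a',b',c').
Proof.
  intros [kg [kh [? [? [? [? [? [? ?]]]]]]]] Ea Eb Ec. exists kg, kh. repeat split; auto.
  - rewrite Eb; auto. - intros; apply Eb; auto. - rewrite Ec; auto.
  - intros; apply Ec; auto. - intros; apply Ea; auto.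
Qed.

Lemma Zc_in d B C0 C1 : (3 <= d)%nat -> B <> 0 -> C1 <> 0 -> inPd d (Zc B C0 C1).
Proof.
  intros Hd HB HC. unfold Zc. apply inPd_iff; auto. split.
  - apply knot_monoH.
    + intros t1 t2. pev. intros E. apply (Rmult_eq_reg_l C1); auto. lra.
    + intros t. pev. lra.
  - exists 0%nat, 1%nat. repeat split; try lia; intros; cval; lra.
Qed.

Lemma S2 d a b c : (3 <= d)%nat -> inPd d (a,b,c) -> a O = 0 -> b O <> 0 -> c 1%nat <> 0 ->
  Conn d (a,b,c) (Zc (b O) (c O) (c 1%nat)).
Proof.
  intros Hd Hin Ha0 Hb0 Hc1.
  set (P := fun u : R => (cscale (1-u) a, cscale (1-u) b, zc (1-u) c)).
  apply (Conn_eqA_l d (P 0)); [|apply (Conn_eqA_r d _ (P 1))].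
  - unfold P, cscale, zc; simpl. replace (1-0) with 1 by ring.
    split; [|split]; intros i Hi; try destruct i; rewrite ?pow1; ring.
  - apply seg.
    + unfold P, cscale, zc; split; [|split]; intros i Hi; simpl; [reg|reg|destruct i; reg].
    + intros u [Hu0 Hu1]. unfold P. destruct (Req_EM_T (1-u) 0) as [Hs|Hs].
      * rewrite Hs. apply (inPd_eqA d (Zc (b O) (c O) (c 1%nat))); auto; [|apply Zc_in; auto].
        unfold Zc, cscale, zc; simpl.
        split; [|split]; intros i Hi; destruct i as [|[|i]]; unfold cadd, cscal, mono, czero; simpl; rewrite ?Ha0; ring.
      * apply inPd_iff in Hin; auto. destruct Hin as [HK HD]. apply inPd_iff; auto. split.
        -- apply (knot_transform d a b c _ _ _ (1-u) 1 1 (/(1-u)) 0 0 0 0 0 ((1-u-1) * c O / (1-u))); auto;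
             try lra; try (apply Rinv_neq_0_compat; auto); intros t.
           ++ rewrite peval_cscale; ring.
           ++ rewrite peval_cscale; ring.
           ++ apply (Rmult_eq_reg_l (1-u)); auto. rewrite zc_peval. field; auto.
           ++ rewrite pder_cscale; ring.
           ++ rewrite pder_cscale; ring.
           ++ apply (Rmult_eq_reg_l (1-u)); auto. rewrite zc_pder. field; auto.
        -- apply (DegOK_equiv d a b c); auto; intros i; unfold cscale, zc.
           ++ split; intros E; [|rewrite E; ring]. apply Rmult_integral in E; destruct E as [E|E]; auto.
              exfalso; apply (pow_nonzero (1-u) i); auto.
           ++ split; intros E; [|rewrite E; ring]. apply Rmult_integral in E; destruct E as [E|E]; auto.
              exfalso; apply (pow_nonzero (1-u) i); auto.
           ++ destruct i; [tauto|]. split; intros E; [|rewrite E; ring]. apply Rmult_integral in E; destruct E as [E|E]; auto.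
              exfalso; apply (pow_nonzero (1-u) i); auto.
  - unfold P, Zc, cscale, zc; simpl. replace (1-1) with 0 by ring.
    split; [|split]; intros i Hi; destruct i as [|[|i]]; unfold cadd, cscal, mono, czero; simpl; rewrite ?Ha0; ring.
Qed.

Lemma S1 d a b c : (3 <= d)%nat -> inPd d (a,b,c) ->
  exists a1 b1 c1, Conn d (a,b,c) (a1,b1,c1) /\ inPd d (a1,b1,c1) /\ a1 O = 0 /\ b1 O <> 0 /\ c1 1%nat <> 0.
Proof.
  intros Hd Hin.
  set (B := if Req_EM_T (b O) 0 then 1 else b O).
  set (e := if Req_EM_T (c 1%nat) 0 then (if Req_EM_T (b 1%nat) 0 then 0 else 1) else 0).
  set (z := if Req_EM_T (c 1%nat) 0 then (if Req_EM_T (b 1%nat) 0 then 1 else 0) else 0).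
  set (P := fun u : R => (cadd a (cscal (-(u * a O)) (mono 0)), cadd b (cscal (u * (B - b O)) (mono 0)),
                 cadd c (cadd (cscal (u*e) (cut b (d-1))) (cscal (u*z) (cut a (d-2)))))).
  assert (HP : forall u, unit_I u -> inPd d (P u)).
  { intros u [Hu0 Hu1]. pose proof Hin as Hin'. apply inPd_iff in Hin'; auto.
    destruct Hin' as [HK [kg [kh [H1 [H2 [H3 [H4 [H5 [H6 H7]]]]]]]]].
    unfold P. apply inPd_iff; auto. split.
    - apply (knot_transform d a b c _ _ _ 1 1 1 1 0 (u*e) (u*z) (-(u * a O)) (u * (B - b O)) 0); auto;
        try lra; intros t; pev; rewrite ?peval_cut, ?pder_cut by lia; rewrite ?Rmult_1_l; ring.
    - exists kg, kh. unfold cadd, cscal, mono, cut. repeat split; auto.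
      + destruct kg as [|kg]; simpl.
        * unfold B. destruct (Req_EM_T (b O) 0); [contradiction|]. replace (b O + u * (b O - b O) * 1) with (b O) by ring; auto.
        * replace (b (S kg) + u * (B - b O) * 0) with (b (S kg)) by ring; auto.
      + intros j Hj. destruct j as [|j]; [lia|]. simpl. rewrite H4 by lia. ring.
      + destruct (Nat.leb_spec kh (d-1)); destruct (Nat.leb_spec kh (d-2)); rewrite ?(H4 kh), ?(H7 kh) by lia;
          replace (c kh + (u * e * _ + u * z * _)) with (c kh) by ring; auto.
      + intros j Hj. rewrite H6 by lia.
        destruct (Nat.leb_spec j (d-1)); destruct (Nat.leb_spec j (d-2)); rewrite ?(H4 j), ?(H7 j) by lia; ring.
      + intros j Hj. destruct j as [|j]; simpl.
        * rewrite H7 by lia. ring.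
        * rewrite H7 by lia. ring. }
  exists (fst (fst (P 1))), (snd (fst (P 1))), (snd (P 1)). split; [|split; [|split; [|split]]].
  - apply (Conn_eqA_l d (P 0)); [|apply (Conn_eqA_r d _ (P 1))].
    + unfold P; simpl. split; [|split]; intros i Hi; unfold cadd, cscal; ring.
    + apply seg; auto. unfold P; split; [|split]; intros i Hi; simpl; unfold cadd, cscal; reg.
    + destruct (P 1) as [[? ?] ?]; apply eqA_refl.
  - assert (H := HP 1 ltac:(split; lra)). destruct (P 1) as [[? ?] ?]. exact H.
  - unfold P, cadd, cscal, mono; simpl. ring.
  - unfold P, cadd, cscal, mono; simpl. unfold B. destruct (Req_EM_T (b O) 0); lra.
  - assert (L1 : Nat.leb 1 (d-1) = true) by (apply Nat.leb_le; lia).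
    assert (L2 : Nat.leb 1 (d-2) = true) by (apply Nat.leb_le; lia).
    unfold P, cadd, cscal, mono, cut; cbn -[Nat.leb]. rewrite L1, L2.
    apply inPd_iff in Hin; auto. destruct Hin as [[_ K2] _]. pose proof (K2 0) as K.
    rewrite !pder_at0 in K by lia.
    unfold e, z. destruct (Req_EM_T (c 1%nat) 0); destruct (Req_EM_T (b 1%nat) 0).
    + intros E. apply K. repeat split; auto. lra.
    + intros E. apply n. lra.
    + intros E. apply n. lra.
    + intros E. apply n. lra.
Qed.

Lemma to_T d p : (3 <= d)%nat -> inPd d p -> Conn d p T0.
Proof.
  intros Hd Hp. destruct p as [[a b] c].
  destruct (S1 d a b c Hd Hp) as [a1 [b1 [c1 [C1 [Hin [H0 [H1 H2]]]]]]].
  eapply Conn_trans; eauto. eapply Conn_trans; auto. apply S2; eauto. apply Zc_T; auto.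
Qed.

Theorem mainTheorem4 (d : nat) (Hd : (3 <= d)%nat) : Pd_path_connected d.
Proof.
  intros p q Hp Hq. apply Conn_final. eapply Conn_trans; auto.
  apply to_T; eauto. apply Conn_sym. apply to_T; auto.
Qed.
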